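(* In the algorithm DMA, let $\alpha_t\ge1$ be the maximum number of packets that a server needs to send or receive at time slot $t$ in the merged schedule of Step 3. Then for every $t\in[0,(\mu+1/\beta)\Delta]$, $\mathbb{E}[\alpha_t]=O(g(m))$, where $g(m)=\log(m)/\log(\log(m))$.
   Context: Model. $m$ servers, each a sender and a receiver. A coflow is an $m\times m$ nonnegative integer matrix $(d_{sr})$ of unit packets from sender $s$ to receiver $r$. Each job $j\in\mathcal{N}$ has $\mu_j$ coflows $\mathcal{D}^{(cj)}$ and a DAG $G_j$ (edge $c_1\to c_2$: $c_2$ may not start before $c_1$ finishes). Each slot, each sender sends at most one and each receiver receives at most one packet. $\mu=\max_j\mu_j$. Effective size of a coflow: $D=\max\{\max_s\sum_rd_{sr},\max_r\sum_sd_{sr}\}$; $\Delta$ is the effective size of $\sum_j\sum_c\mathcal{D}^{(cj)}$. BNA: polynomial-time procedure scheduling all packets of a coflow of effective size $D$ feasibly in $D$ consecutive slots. Algorithm DMA (constant $\beta>1/e$): Step 1: for each job, schedule its coflows one after another in a topological order of $G_j$, each with BNA, starting at time $0$. Step 2: delay each job's schedule by an independent uniformly random integer in $[0,\Delta/\beta]$. Step 3: merge the delayed schedules slot by slot (capacity constraints may be violated). Step 4: replace each slot $t$ by $\alpha_t$ slots scheduled feasibly with BNA. *)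

(* Defs.v *)
From HB Require Import structures.
From mathcomp Require Import all_boot all_order all_algebra all_fingroup.
From mathcomp Require Import all_classical all_reals all_analysis.
Set Implicit Arguments. Unset Strict Implicit. Unset Printing Implicit Defensive.
Import Order.TTheory GRing.Theory Num.Theory.

(* A coflow / a slot of a schedule: m x m matrix of packet counts,
   entry (s, r) = number of unit packets from sender s to receiver r. *)
Definition mat (m : nat) := 'I_m -> 'I_m -> nat.

Definition effsize (m : nat) (A : mat m) : nat :=
  maxn (\max_(s < m) \sum_(r < m) A s r) (\max_(r < m) \sum_(s < m) A s r).

Definition feasible_slot (m : nat) (A : mat m) : bool :=
  [forall s : 'I_m, \sum_(r < m) A s r <= 1] &&
  [forall r : 'I_m, \sum_(s < m) A s r <= 1].

(* Output P of BNA on coflow A: all packets of A scheduled feasibly in the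
   effsize A consecutive slots 0, ..., effsize A - 1 (relative time). *)
Definition is_BNA_schedule (m : nat) (A : mat m) (P : nat -> mat m) : Prop :=
  [/\ forall k, feasible_slot (P k),
      forall k, effsize A <= k -> forall s r, P k s r = 0
    & forall s r, \sum_(k < effsize A) P k s r = A s r].

Definition is_topo_order (k : nat) (G : rel 'I_k) (pos : {perm 'I_k}) : Prop :=
  forall c1 c2, G c1 c2 -> pos c1 < pos c2.

Definition start_time (m k : nat) (A : 'I_k -> mat m) (pos : {perm 'I_k}) (c : 'I_k) : nat :=
  \sum_(c' < k | pos c' < pos c) effsize (A c').

Definition job_sched (m k : nat) (A : 'I_k -> mat m) (pos : {perm 'I_k})
    (P : 'I_k -> nat -> mat m) : nat -> mat m :=
  fun tau s r => \sum_(c < k)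
    (if start_time A pos c <= tau then P c (tau - start_time A pos c) s r else 0).

(* Steps 2-3: merged schedule at slot t, job j delayed by d j *)
Definition merged (m n : nat) (sched : 'I_n -> nat -> mat m) (d : 'I_n -> nat)
    (t : nat) : mat m :=
  fun s r => \sum_(j < n) (if d j <= t then sched j (t - d j) s r else 0).

Definition alpha (m n : nat) (sched : 'I_n -> nat -> mat m) (d : 'I_n -> nat)
    (t : nat) : nat :=
  maxn 1 (effsize (merged sched d t)).

Definition Delta (m n : nat) (mu : 'I_n -> nat) (A : forall j, 'I_(mu j) -> mat m) : nat :=
  effsize (fun s r => \sum_(j < n) \sum_(c < mu j) A j c s r).

Definition mu_max (n : nat) (mu : 'I_n -> nat) : nat := \max_(j < n) mu j.

(* E[alpha_t] when delays are independent and uniform on {0, ..., K} *)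
Definition expected_alpha (R : realType) (m n K : nat)
    (sched : 'I_n -> nat -> mat m) (t : nat) : R :=
  ((\sum_(d : {ffun 'I_n -> 'I_K.+1}) (alpha sched (fun j => nat_of_ord (d j)) t)%:R)
    / ((K.+1 ^ n)%:R))%R.

(* Main.v *)
Require Import Defs.
From HB Require Import structures.
From mathcomp Require Import all_boot all_order all_algebra all_fingroup.
From mathcomp Require Import all_classical all_reals all_analysis.
From mathcomp Require Import ring lra.
Import Order.TTheory GRing.Theory Num.Theory.

Section NatPart.
Local Open Scope nat_scope.

Lemma vanish_sum (g : nat -> nat) E T :
  (forall k, E <= k -> g k = 0) -> \sum_(k < T) g k <= \sum_(k < E) g k.
Proof.
move=> hg; rewrite -!(big_mkord xpredT).
case: (leqP T E) => h.
  by rewrite (big_cat_nat (leq0n T) h) /= leq_addr.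
rewrite (big_cat_nat (leq0n E) (ltnW h)) /= [X in _ + X <= _]big_nat_cond [X in _ + X <= _]big1 ?addn0 //.
by move=> i /andP[/andP[hi _] _]; exact: hg.
Qed.

Lemma shift_sum (h : nat -> nat) st E T :
  (forall k, E <= k -> h k = 0) ->
  \sum_(tau < T) (if st <= tau then h (tau - st) else 0) <= \sum_(k < E) h k.
Proof.
move=> hh.
have H := vanish_sum (fun tau => if st <= tau then h (tau - st) else 0) (st+E) T.
apply: leq_trans (H _) _.
  move=> k hk; case: ifP => // hs; apply: hh; by rewrite leq_subRL.
rewrite -(big_mkord xpredT (fun k => if st <= k then h (k-st) else 0)) (big_cat_nat (leq0n st) (leq_addr E st)) /=.
rewrite [X in X + _]big_nat_cond [X in X + _]big1 ?add0n; last first.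
  by move=> i /andP[/andP[_ hi] _]; rewrite leqNgt hi.
rewrite -{1}(add0n st) big_addn addKn -(big_mkord xpredT).
apply: eq_leq; apply: eq_bigr => i _; by rewrite leq_addl addnK.
Qed.

Lemma sum_le1_unique (I : finType) (v : I -> nat) :
  (forall i, v i <= 1) -> (forall i1 i2, v i1 != 0 -> v i2 != 0 -> i1 = i2) ->
  \sum_i v i <= 1.
Proof.
move=> h1 hu; case: (pickP (fun i => v i != 0)) => [i0 hi0 | hall].
  rewrite (bigD1 i0) //= big1 ?addn0 // => i hi.
  apply/eqP; apply: contraT => hvi; move: hi; by rewrite (hu _ _ hvi hi0) eqxx.
by rewrite big1 // => i _; apply/eqP; move: (hall i) => /= /negbFE.
Qed.
End NatPart.

Section NatPart2.
Local Open Scope nat_scope.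
Lemma rev_sum (f : nat -> nat) N t :
  \sum_(x < N) (if x <= t then f (t - x) else 0) <= \sum_(tau < t.+1) f tau.
Proof.
have H := vanish_sum (fun x => if x <= t then f (t - x) else 0) t.+1 N.
apply: leq_trans (H _) _.
  by move=> k hk; rewrite leqNgt hk.
rewrite -(big_mkord xpredT (fun x => if x <= t then f (t - x) else 0)).
rewrite -(big_mkord xpredT f) big_nat_rev /= big_nat_cond [leqRHS]big_nat_cond.
apply: eq_leq; apply: eq_bigr => i /andP[/andP[_ hi] _].
by rewrite add0n subSS ifT ?leq_subr // subKn.
Qed.
End NatPart2.

Section Load.
Local Open Scope nat_scope.
Variables (m : nat) (l : mat m -> nat).
Hypothesis hsum : forall (I : finType) (F : I -> mat m),
  l (fun s r => \sum_(i : I) F i s r) = \sum_i l (F i).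
Hypothesis hext : forall M1 M2 : mat m, (forall s r, M1 s r = M2 s r) -> l M1 = l M2.
Hypothesis h0 : l (fun _ _ => 0) = 0.
Hypothesis hfeas : forall M, feasible_slot M -> l M <= 1.
Hypothesis heff : forall M, l M <= effsize M.

Lemma l_if b M : l (fun s r => if b then M s r else 0) = if b then l M else 0.
Proof. by case: b => //=; apply: hext. Qed.

Section Job.
Variables (k : nat) (Ac : 'I_k -> mat m) (pos : {perm 'I_k}) (Pc : 'I_k -> nat -> mat m).
Hypothesis hB : forall c, is_BNA_schedule (Ac c) (Pc c).

Lemma l_P_vanish c k0 : effsize (Ac c) <= k0 -> l (Pc c k0) = 0.
Proof. by case: (hB c) => _ hz _ h; rewrite -h0; apply: hext => s r; exact: hz. Qed.

Lemma l_A c : l (Ac c) = \sum_(k0 < effsize (Ac c)) l (Pc c k0).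
Proof. by case: (hB c) => _ _ hs; rewrite -hsum; apply: hext => s r; rewrite hs. Qed.

Lemma l_job tau : l (job_sched Ac pos Pc tau) =
  \sum_c (if start_time Ac pos c <= tau then l (Pc c (tau - start_time Ac pos c)) else 0).
Proof.
rewrite /job_sched (@hsum _ (fun c s r => if start_time Ac pos c <= tau
   then Pc c (tau - start_time Ac pos c) s r else 0)).
by apply: eq_bigr => c _; exact: l_if.
Qed.

Lemma start_lt c1 c2 : pos c1 < pos c2 ->
  start_time Ac pos c1 + effsize (Ac c1) <= start_time Ac pos c2.
Proof.
move=> hlt; rewrite /start_time [leqRHS](bigD1 c1) //= addnC leq_add2l.
rewrite [leqLHS]big_mkcond [leqRHS]big_mkcond; apply: leq_sum => c _.
case: ifP => h1 //; rewrite ifT //; apply/andP; split; first exact: ltn_trans h1 hlt.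
by apply/eqP => e; move: h1; rewrite e ltnn.
Qed.

Lemma l_job_le1 tau : l (job_sched Ac pos Pc tau) <= 1.
Proof.
rewrite l_job; apply: sum_le1_unique.
  by move=> c; case: ifP => // _; apply: hfeas; case: (hB c).
have key : forall c, (if start_time Ac pos c <= tau then
    l (Pc c (tau - start_time Ac pos c)) else 0) != 0 ->
    (start_time Ac pos c <= tau) && (tau < start_time Ac pos c + effsize (Ac c)).
  move=> c; case: ifP => // h hn; rewrite ?h /= -ltn_subLR //.
  by rewrite ltnNge; apply/negP => hge; move: hn; rewrite l_P_vanish // eqxx.
move=> c1 c2 /key/andP[a1 b1] /key/andP[a2 b2]; apply: (@perm_inj _ pos).
case: (ltngtP (pos c1) (pos c2)) => h.
- by move: (leq_trans b1 (start_lt _ _ h)); rewrite ltnNge a2.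
- by move: (leq_trans b2 (start_lt _ _ h)); rewrite ltnNge a1.
- exact: val_inj.
Qed.

Lemma l_job_total T : \sum_(tau < T) l (job_sched Ac pos Pc tau) <= \sum_c l (Ac c).
Proof.
rewrite (eq_bigr _ (fun (tau : 'I_T) _ => l_job tau)).
rewrite exchange_big /=; apply: leq_sum => c _; rewrite l_A; apply: (shift_sum (fun k0 => l (Pc c k0))) => k0.
exact: l_P_vanish.
Qed.
End Job.

Variables (n : nat) (mu : 'I_n -> nat) (A : forall j, 'I_(mu j) -> mat m)
  (pos : forall j, {perm 'I_(mu j)}) (P : forall j, 'I_(mu j) -> nat -> mat m).
Hypothesis hBNA : forall j c, is_BNA_schedule (A j c) (P j c).
Variables (N t : nat).

Definition yl j (x : 'I_N) :=
  if x <= t then l (job_sched (A j) (pos j) (P j) (t - x)) else 0.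

Lemma l_merged (d : {ffun 'I_n -> 'I_N}) :
  l (merged (fun j => job_sched (A j) (pos j) (P j)) (fun j => nat_of_ord (d j)) t)
  = \sum_j yl j (d j).
Proof.
rewrite /merged (@hsum _ (fun j s r => if d j <= t then
   job_sched (A j) (pos j) (P j) (t - d j) s r else 0)).
by apply: eq_bigr => j _; exact: l_if.
Qed.

Lemma yl_le1 j x : yl j x <= 1.
Proof. by rewrite /yl; case: ifP => // _; apply: l_job_le1. Qed.

Lemma yl_total : \sum_j \sum_x yl j x <= Delta A.
Proof.
apply: leq_trans (heff _); rewrite hsum; apply: leq_sum => j _; rewrite hsum.
apply: leq_trans (rev_sum (fun tau => l (job_sched (A j) (pos j) (P j) tau)) _ _) _.
exact: l_job_total.
Qed.
End Load.

Local Open Scope ring_scope.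

Lemma chernoff_ffun (R : realType) (n N : nat) (y : 'I_n -> 'I_N -> nat) (lam b : R) :
  0 <= lam -> (forall j x, (y j x <= 1)%N) ->
  (\sum_j \sum_x y j x)%:R <= b * N%:R -> (0 < N)%N ->
  \sum_(d : {ffun 'I_n -> 'I_N}) expR (lam * (\sum_j y j (d j))%:R)
    <= N%:R ^+ n * expR ((expR lam - 1) * b).
Proof.
move=> hlam hy hb hN.
have e1 : forall d : {ffun 'I_n -> 'I_N}, expR (lam * (\sum_j y j (d j))%:R)
    = \prod_j expR (lam * (y j (d j))%:R).
  by move=> d; rewrite natr_sum mulr_sumr expR_sum.
rewrite (eq_bigr _ (fun d _ => e1 d)).
rewrite -(bigA_distr_bigA (fun j x => expR (lam * (y j x)%:R))) /=.
have hN' : (0 : R) < N%:R by rewrite ltr0n.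
have e2 : forall j, \sum_x expR (lam * (y j x)%:R)
    = N%:R * (1 + (expR lam - 1) * ((\sum_x y j x)%:R / N%:R)).
  move=> j; have -> : N%:R * (1 + (expR lam - 1) * ((\sum_x y j x)%:R / N%:R))
     = N%:R + (expR lam - 1) * (\sum_x y j x)%:R :> R.
    by field; rewrite gt_eqF.
  rewrite natr_sum mulr_sumr.
  have -> : (N%:R : R) = \sum_(x < N) (1 : R) by rewrite sumr_const card_ord.
  rewrite -big_split /=.
  apply: eq_bigr => x _; have := hy j x.
  case: (y j x) => [|[|//]] _; rewrite ?mulr0 ?expR0 ?addr0 // mulr1.
  lra.
rewrite (eq_bigr _ (fun j _ => e2 j)).
have hl1 : 0 <= expR lam - 1 by rewrite subr_ge0 -expR0 ler_expR.
apply: (@le_trans _ _ (\prod_(j < n) (N%:R * expR ((expR lam - 1) * ((\sum_x y j x)%:R / N%:R))))).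
  apply: ler_prod => j _; apply/andP; split.
    by rewrite mulr_ge0 ?ler0n // addr_ge0 // mulr_ge0 // divr_ge0 ?ler0n.
  by rewrite ler_pM2l // expR_ge1Dx.
rewrite big_split /= prodr_const card_ord -expR_sum ler_pM2l ?exprn_gt0 //.
rewrite ler_expR -mulr_sumr ler_wpM2l // -mulr_suml -natr_sum ler_pdivrMr //.
Qed.

Lemma expR_max (R : realType) (lam : R) (a b : nat) : 0 <= lam ->
  expR (lam * (maxn a b)%:R) <= expR (lam * a%:R) + expR (lam * b%:R).
Proof.
move=> hl; case: (leqP a b) => h.
  by rewrite lerDr ltW // expR_gt0.
by rewrite lerDl ltW // expR_gt0.
Qed.

Lemma expR_bigmax (R : realType) (lam : R) (I : finType) (f : I -> nat) : 0 <= lam ->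
  expR (lam * (\max_i f i)%:R) <= 1 + \sum_i expR (lam * (f i)%:R).
Proof.
move=> hl; rewrite -lerBlDl.
pose K (x : nat) (z : R) := expR (lam * x%:R) - 1 <= z.
apply: (@big_ind2 _ _ K) => [|x1 x2 y1 y2 h1 h2|i _]; rewrite /K.
- by rewrite mulr0 expR0 subrr.
- have g1 : 0 <= x2 by apply: le_trans h1; rewrite subr_ge0 -expR0 ler_expR mulr_ge0.
  have g2 : 0 <= y2 by apply: le_trans h2; rewrite subr_ge0 -expR0 ler_expR mulr_ge0.
  case: (leqP x1 y1) => h.
    by apply: le_trans h2 _; rewrite lerDr.
  by apply: le_trans h1 _; rewrite lerDl.
- by rewrite lerBlDl lerDr.
Qed.


Section Inst.
Local Open Scope nat_scope.
Variables (m : nat).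
Definition lrow (s0 : 'I_m) (M : mat m) := \sum_r M s0 r.
Definition lcol (r0 : 'I_m) (M : mat m) := \sum_s M s r0.

Lemma lrow_sum s0 (I : finType) (F : I -> mat m) :
  lrow s0 (fun s r => \sum_(i : I) F i s r) = \sum_i lrow s0 (F i).
Proof. exact: exchange_big. Qed.
Lemma lcol_sum s0 (I : finType) (F : I -> mat m) :
  lcol s0 (fun s r => \sum_(i : I) F i s r) = \sum_i lcol s0 (F i).
Proof. exact: exchange_big. Qed.
Lemma lrow_ext s0 (M1 M2 : mat m) : (forall s r, M1 s r = M2 s r) -> lrow s0 M1 = lrow s0 M2.
Proof. by move=> h; apply: eq_bigr => r _; rewrite h. Qed.
Lemma lcol_ext s0 (M1 M2 : mat m) : (forall s r, M1 s r = M2 s r) -> lcol s0 M1 = lcol s0 M2.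
Proof. by move=> h; apply: eq_bigr => r _; rewrite h. Qed.
Lemma lrow_0 s0 : lrow s0 (fun _ _ => 0) = 0.
Proof. by rewrite /lrow big1. Qed.
Lemma lcol_0 s0 : lcol s0 (fun _ _ => 0) = 0.
Proof. by rewrite /lcol big1. Qed.
Lemma lrow_feas s0 M : feasible_slot M -> lrow s0 M <= 1.
Proof. by case/andP => /forallP h _; exact: h. Qed.
Lemma lcol_feas s0 M : feasible_slot M -> lcol s0 M <= 1.
Proof. by case/andP => _ /forallP h; exact: h. Qed.
Lemma lrow_eff s0 M : lrow s0 M <= effsize M.
Proof. exact: leq_trans (leq_bigmax s0) (leq_maxl _ _). Qed.
Lemma lcol_eff s0 M : lcol s0 M <= effsize M.
Proof. exact: leq_trans (leq_bigmax s0) (leq_maxr _ _). Qed.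
End Inst.
Arguments lrow {m} s0 M.
Arguments lcol {m} r0 M.

Local Open Scope ring_scope.

Section Cher.
Variables (R : realType) (m : nat) (l : mat m -> nat).
Hypothesis hsum : forall (I : finType) (F : I -> mat m),
  l (fun s r => \sum_(i : I) F i s r) = \sum_i l (F i).
Hypothesis hext : forall M1 M2 : mat m, (forall s r, M1 s r = M2 s r) -> l M1 = l M2.
Hypothesis h0 : l (fun _ _ => 0%N) = 0%N.
Hypothesis hfeas : forall M, feasible_slot M -> (l M <= 1)%N.
Hypothesis heff : forall M, (l M <= effsize M)%N.

Lemma l_chernoff n (mu : 'I_n -> nat) (A : forall j, 'I_(mu j) -> mat m)
  (pos : forall j, {perm 'I_(mu j)}) (P : forall j, 'I_(mu j) -> nat -> mat m)
  (hB : forall j c, is_BNA_schedule (A j c) (P j c)) (K t : nat) (lam b : R) :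
  0 <= lam -> (Delta A)%:R <= b * K.+1%:R ->
  \sum_(d : {ffun 'I_n -> 'I_K.+1}) expR (lam *
     (l (merged (fun j => job_sched (A j) (pos j) (P j)) (fun j => nat_of_ord (d j)) t))%:R)
  <= K.+1%:R ^+ n * expR ((expR lam - 1) * b).
Proof.
move=> hl hD.
rewrite (eq_bigr _ (fun d _ => congr1 (fun z : nat => expR (lam * z%:R)) (@l_merged _ _ hsum h0 _ _ A pos P K.+1 t d))).
rewrite /=; apply: chernoff_ffun => //.
  by move=> j x; exact: (@yl_le1 _ _ hsum hext h0 hfeas _ _ _ _ _ hB _ _ j x).
apply: le_trans hD; rewrite ler_nat; exact: (@yl_total _ _ hsum hext h0 heff _ _ _ _ _ hB _ _).
Qed.
End Cher.

Local Open Scope ring_scope.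

Lemma pt_bound (R : realType) (lam k : R) (a : nat) : 0 < lam ->
  a%:R <= k + expR (-(lam * k)) / lam * expR (lam * a%:R).
Proof.
move=> hl; rewrite mulrAC -expRD -lerBlDl ler_pdivlMr //.
have := expR_ge1Dx (-(lam * k) + lam * a%:R); lra.
Qed.

Lemma alpha_exp (R : realType) m n (S : 'I_n -> nat -> mat m) d t (lam : R) : 0 <= lam ->
  expR (lam * (alpha S d t)%:R) <= expR lam + 2 +
    \sum_s expR (lam * (lrow s (merged S d t))%:R) +
    \sum_r expR (lam * (lcol r (merged S d t))%:R).
Proof.
move=> hl; rewrite /alpha /effsize.
apply: le_trans (@expR_max _ lam 1 _ hl) _; rewrite mulr1 -!addrA lerD2l.
apply: le_trans (@expR_max _ lam _ _ hl) _.
have h1 := @expR_bigmax _ lam _ (fun s => lrow s (merged S d t)) hl.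
have h2 := @expR_bigmax _ lam _ (fun r => lcol r (merged S d t)) hl.
rewrite /lrow /lcol /= in h1 h2 *.
lra.
Qed.

Lemma bound_lam (R : realType) m n (mu : 'I_n -> nat) (A : forall j, 'I_(mu j) -> mat m)
  (pos : forall j, {perm 'I_(mu j)}) (P : forall j, 'I_(mu j) -> nat -> mat m)
  (hB : forall j c, is_BNA_schedule (A j c) (P j c)) (K t : nat) (lam k b : R) :
  0 < lam -> (Delta A)%:R <= b * K.+1%:R ->
  expected_alpha R K (fun j => job_sched (A j) (pos j) (P j)) t <=
  k + expR (-(lam * k)) / lam * (expR lam + 2 + 2 * m%:R * expR ((expR lam - 1) * b)).
Proof.
move=> hl hD.
set S := (fun j => job_sched (A j) (pos j) (P j)).
set c0 := expR (-(lam * k)) / lam.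
set E := expR ((expR lam - 1) * b).
have hc0 : 0 <= c0 by rewrite /c0 divr_ge0 ?ltW ?expR_gt0.
have hQ : (0 : R) < (K.+1 ^ n)%:R by rewrite ltr0n expn_gt0.
rewrite /expected_alpha ler_pdivrMr //.
apply: (@le_trans _ _ (\sum_(d : {ffun 'I_n -> 'I_K.+1})
   (k + c0 * expR (lam * (alpha S (fun j => nat_of_ord (d j)) t)%:R)))).
  by apply: ler_sum => d _; exact: pt_bound.
rewrite big_split /= sumr_const card_ffun !card_ord -mulr_sumr.
have hsum : \sum_(d : {ffun 'I_n -> 'I_K.+1})
     expR (lam * (alpha S (fun j => nat_of_ord (d j)) t)%:R)
   <= (K.+1 ^ n)%:R * (expR lam + 2) + m%:R * ((K.+1 ^ n)%:R * E)
      + m%:R * ((K.+1 ^ n)%:R * E).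
  apply: (@le_trans _ _ (\sum_(d : {ffun 'I_n -> 'I_K.+1}) (expR lam + 2 +
    \sum_s expR (lam * (lrow s (merged S (fun j => nat_of_ord (d j)) t))%:R) +
    \sum_r expR (lam * (lcol r (merged S (fun j => nat_of_ord (d j)) t))%:R)))).
    by apply: ler_sum => d _; apply: alpha_exp; exact: ltW.
  have hX : \sum_(s < m) \sum_(d : {ffun 'I_n -> 'I_K.+1})
      expR (lam * (lrow s (merged S (fun j => nat_of_ord (d j)) t))%:R)
      <= m%:R * ((K.+1 ^ n)%:R * E).
    apply: (@le_trans _ _ (\sum_(s < m) ((K.+1 ^ n)%:R * E))); last first.
      by rewrite sumr_const card_ord [X in _ <= X]mulr_natl.
    apply: ler_sum => s _; rewrite natrX.
    apply: (@l_chernoff _ _ _ (@lrow_sum m s) (@lrow_ext m s) (@lrow_0 m s) (@lrow_feas m s) (@lrow_eff m s)) => //.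
    exact: ltW.
  have hY : \sum_(s < m) \sum_(d : {ffun 'I_n -> 'I_K.+1})
      expR (lam * (lcol s (merged S (fun j => nat_of_ord (d j)) t))%:R)
      <= m%:R * ((K.+1 ^ n)%:R * E).
    apply: (@le_trans _ _ (\sum_(s < m) ((K.+1 ^ n)%:R * E))); last first.
      by rewrite sumr_const card_ord [X in _ <= X]mulr_natl.
    apply: ler_sum => s _; rewrite natrX.
    apply: (@l_chernoff _ _ _ (@lcol_sum m s) (@lcol_ext m s) (@lcol_0 m s) (@lcol_feas m s) (@lcol_eff m s)) => //.
    exact: ltW.
  rewrite !big_split /= sumr_const card_ffun !card_ord.
  rewrite (exchange_big _ _ _ _ _ (fun (d : {ffun 'I_n -> 'I_K.+1}) (s : 'I_m) => expR (lam * (lrow s (merged S (fun j => nat_of_ord (d j)) t))%:R))) /=.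
  rewrite (exchange_big _ _ _ _ _ (fun (d : {ffun 'I_n -> 'I_K.+1}) (s : 'I_m) => expR (lam * (lcol s (merged S (fun j => nat_of_ord (d j)) t))%:R))) /=.
  have hone : \sum_(d : {ffun 'I_n -> 'I_K.+1}) (1:R) = (K.+1^n)%:R.
    by rewrite sumr_const card_ffun !card_ord.
  rewrite hone -[expR lam *+ _]mulr_natr.
  move: hX hY; set X := \sum_(s < m) _; set Y := \sum_(s < m) _ => hX hY.
  set Q := (K.+1 ^ n)%:R; lra.
apply: le_trans (lerD (lexx _) (ler_wpM2l hc0 hsum)) _.
rewrite -[k *+ _]mulr_natr; set Q := (K.+1 ^ n)%:R; lra.
Qed.

Local Open Scope ring_scope.

Lemma numeric (R : realType) (beta x : R) : 0 < beta -> 1 < x ->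
  (beta + 2) * x / ln x + expR (-(ln x * ((beta + 2) * x / ln x))) / ln x *
    (x + 2 + 2 * expR x * expR ((x - 1) * beta)) <= (beta + 7) * (x / ln x).
Proof.
move=> hb hx.
have hl : 0 < ln x := ln_gt0 hx.
have el : ln x * ((beta + 2) * x / ln x) = (beta + 2) * x.
  by field; rewrite gt_eqF.
rewrite el.
set a := expR (-((beta + 2) * x)).
have ha : 0 <= a by rewrite ltW // expR_gt0.
have t1 : a * x <= 1.
  have e1 : a * expR ((beta + 2) * x) = 1 by rewrite -expRD addNr expR0.
  rewrite -e1 ler_wpM2l //.
  apply: le_trans (expR_ge1Dx _); have h7 := mulr_gt0 hb (lt_trans ltr01 hx); lra.
have t2 : a <= 1.
  rewrite /a -[X in _ <= X]expR0 ler_expR; have := mulr_gt0 hb (lt_trans ltr01 hx); lra.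
have t3 : a * expR x * expR ((x - 1) * beta) <= 1.
  rewrite -!expRD -[X in _ <= X]expR0 ler_expR; lra.
have key : (beta + 2) * x + (a * x + 2 * a + 2 * (a * expR x * expR ((x - 1) * beta)))
    <= (beta + 7) * x by lra.
have -> : (beta + 2) * x / ln x + a / ln x * (x + 2 + 2 * expR x * expR ((x - 1) * beta))
   = ((beta + 2) * x + (a * x + 2 * a + 2 * (a * expR x * expR ((x - 1) * beta)))) / ln x.
  by field; rewrite gt_eqF.
rewrite [X in _ <= X]mulrA; apply: ler_wpM2r => //; rewrite invr_ge0 ltW //.
Qed.

Lemma expR1_le4 (R : realType) : expR (1 : R) <= 4.
Proof.
have h := expR_ge1Dx (- (1/2) : R).
have hp : 0 < expR (1/2 : R) := expR_gt0 _.
have e : expR (- (1/2)) * expR (1/2 : R) = 1 by rewrite -expRD addNr expR0.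
have h2 : expR (1/2 : R) <= 2 by nra.
have -> : (1 : R) = 1/2 + 1/2 by field.
rewrite expRD; nra.
Qed.

Theorem lemma4 (R : realType) (beta : R) (hbeta : expR (-1) < beta) :
  exists C : R, exists m0 : nat,
  forall (m n : nat) (mu : 'I_n -> nat)
    (A : forall j : 'I_n, 'I_(mu j) -> mat m)
    (G : forall j : 'I_n, rel 'I_(mu j))
    (pos : forall j : 'I_n, {perm 'I_(mu j)})
    (P : forall j : 'I_n, 'I_(mu j) -> nat -> mat m)
    (K t : nat),
  (m0 <= m)%N ->
  (forall j, is_topo_order (G j) (pos j)) ->
  (forall j c, is_BNA_schedule (A j c) (P j c)) ->
  (K%:R <= (Delta A)%:R / beta < K.+1%:R) ->
  t%:R <= ((mu_max mu)%:R + beta^-1) * (Delta A)%:R ->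
  expected_alpha R K (fun j => job_sched (A j) (pos j) (P j)) t
    <= C * (ln (m%:R : R) / ln (ln (m%:R : R))).
Proof.
have hb0 : 0 < beta := lt_trans (expR_gt0 _) hbeta.
exists (beta + 7), 5%N.
move=> m n mu A G pos P K t hm _ hB /andP[_ hK] _.
have hM : (5 : R) <= m%:R by rewrite (ler_nat R 5 m).
have hMp : (0 : R) < m%:R by lra.
set x := ln (m%:R : R).
have eM : expR x = m%:R by rewrite /x lnK // posrE.
have hx1 : 1 < x.
  rewrite -ltr_expR eM; have := expR1_le4 R; lra.
have hlam : 0 < ln x := ln_gt0 hx1.
have elam : expR (ln x) = x by rewrite lnK // posrE; lra.
have hD : (Delta A)%:R <= beta * K.+1%:R.
  by rewrite ltr_pdivrMr // in hK; rewrite mulrC ltW.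
apply: le_trans (@bound_lam R m n mu A pos P hB K t (ln x) ((beta + 2) * x / ln x) beta hlam hD) _.
rewrite elam -eM.
exact: numeric.
Qed.
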